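(* If $X$ is a connected, locally path connected, semi-locally simply connected space, then $$\mathrm{cat}_1(X)\le\mathsf{TC}^{\mathcal D}(X)\le\mathrm{cat}_1(X\times X).$$
   Context: $\mathrm{secat}(p)$ is the least $n$ such that the base of $p$ has an open cover by $n+1$ sets each admitting a continuous local section of $p$. The one-category $\mathrm{cat}_1(Z)$ is $\mathrm{secat}$ of the universal covering $\tilde Z\to Z$. $\mathsf{TC}^{\mathcal D}(X)$ is the least $k$ such that $X\times X=U_0\cup\dots\cup U_k$ with $U_i$ open and such that for every $i$ and every basepoint $u\in U_i$ the homomorphism $\pi_1(U_i,u)\to\pi_1(X\times X,u)\cong\pi\times\pi$ ($\pi=\pi_1(X)$) induced by inclusion takes values in a subgroup conjugate to the diagonal $\Delta\subset\pi\times\pi$. *)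

(* Defs.v *)
From Stdlib Require Import Reals Lra.
Open Scope R_scope.

Record Top : Type := MkTop {
  carrier :> Type;
  is_open : (carrier -> Prop) -> Prop;
  open_full : is_open (fun _ => True);
  open_inter : forall U V, is_open U -> is_open V -> is_open (fun x => U x /\ V x);
  open_union : forall F : (carrier -> Prop) -> Prop,
      (forall U, F U -> is_open U) -> is_open (fun x => exists U, F U /\ U x)
}.
Arguments is_open {t} _.

Definition prod_open (X Y : Top) (W : X * Y -> Prop) : Prop :=
  forall p, W p -> exists (A : X -> Prop) (B : Y -> Prop),
    is_open A /\ is_open B /\ A (fst p) /\ B (snd p) /\
    forall q, A (fst q) -> B (snd q) -> W q.

Lemma prod_open_full (X Y : Top) : prod_open X Y (fun _ => True).
Proof.
  intros p _. exists (fun _ => True), (fun _ => True).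
  repeat split; auto using open_full.
Qed.

Lemma prod_open_inter (X Y : Top) U V :
  prod_open X Y U -> prod_open X Y V -> prod_open X Y (fun x => U x /\ V x).
Proof.
  intros HU HV p [Up Vp].
  destruct (HU p Up) as (A1 & B1 & oA1 & oB1 & a1 & b1 & H1).
  destruct (HV p Vp) as (A2 & B2 & oA2 & oB2 & a2 & b2 & H2).
  exists (fun x => A1 x /\ A2 x), (fun y => B1 y /\ B2 y).
  repeat split; auto using open_inter; intuition.
Qed.

Lemma prod_open_union (X Y : Top) (F : (X * Y -> Prop) -> Prop) :
  (forall U, F U -> prod_open X Y U) -> prod_open X Y (fun x => exists U, F U /\ U x).
Proof.
  intros HF p [U [FU Up]].
  destruct (HF U FU p Up) as (A & B & oA & oB & a & b & H).
  exists A, B; repeat split; auto. intros q Aq Bq. exists U; auto.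
Qed.

Definition prodTop (X Y : Top) : Top :=
  @MkTop (X * Y) (prod_open X Y) (prod_open_full X Y) (@prod_open_inter X Y)
    (@prod_open_union X Y).

Definition continuous {X Y : Top} (f : X -> Y) : Prop :=
  forall V : Y -> Prop, is_open V -> is_open (fun x => V (f x)).

Definition continuous_on {X Y : Top} (U : X -> Prop) (s : X -> Y) : Prop :=
  forall x, U x -> forall V : Y -> Prop, is_open V -> V (s x) ->
    exists W : X -> Prop, is_open W /\ W x /\ forall x', W x' -> U x' -> V (s x').

Definition I01 (t : R) : Prop := 0 <= t <= 1.

(** A path: a map [0,1] -> X (values outside [0,1] are irrelevant), continuous *)
Definition is_path {X : Top} (g : R -> X) : Prop :=
  forall t, I01 t -> forall V : X -> Prop, is_open V -> V (g t) ->
    exists d, 0 < d /\ forall t', I01 t' -> Rabs (t' - t) < d -> V (g t').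

Definition path_in {X : Top} (U : X -> Prop) (g : R -> X) : Prop :=
  is_path g /\ forall t, I01 t -> U (g t).

Definition path_from_to {X : Top} (g : R -> X) (a b : X) : Prop :=
  is_path g /\ g 0 = a /\ g 1 = b.

Definition is_loop_at {X : Top} (g : R -> X) (x : X) : Prop := path_from_to g x x.

Definition path_homotopic {X : Top} (g h : R -> X) : Prop :=
  exists H : R -> R -> X,
    (forall s t, I01 s -> I01 t -> forall V : X -> Prop, is_open V -> V (H s t) ->
       exists d, 0 < d /\ forall s' t', I01 s' -> I01 t' ->
         Rabs (s' - s) < d -> Rabs (t' - t) < d -> V (H s' t')) /\
    (forall t, I01 t -> H 0 t = g t) /\
    (forall t, I01 t -> H 1 t = h t) /\
    (forall s, I01 s -> H s 0 = g 0 /\ H s 1 = g 1).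

Definition const_path {X : Top} (x : X) : R -> X := fun _ => x.

Definition concat {X : Top} (g h : R -> X) : R -> X :=
  fun t => if Rle_dec t (1/2) then g (2 * t) else h (2 * t - 1).

Definition rev_path {X : Top} (g : R -> X) : R -> X := fun t => g (1 - t).

Definition connected (X : Top) : Prop :=
  inhabited X /\
  forall U V : X -> Prop, is_open U -> is_open V ->
    (forall x, U x \/ V x) -> (forall x, ~ (U x /\ V x)) ->
    (exists x, U x) -> (exists x, V x) -> False.

Definition path_connected_set {X : Top} (W : X -> Prop) : Prop :=
  forall a b, W a -> W b -> exists g, path_from_to g a b /\ path_in W g.

Definition path_connected (X : Top) : Prop :=
  inhabited X /\ path_connected_set (fun _ : X => True).

Definition locally_path_connected (X : Top) : Prop :=
  forall (x : X) (V : X -> Prop), is_open V -> V x ->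
    exists W, is_open W /\ W x /\ (forall y, W y -> V y) /\ path_connected_set W.

Definition semilocally_simply_connected (X : Top) : Prop :=
  forall x : X, exists U : X -> Prop, is_open U /\ U x /\
    forall g, is_loop_at g x -> path_in U g -> path_homotopic g (const_path x).

Definition simply_connected (X : Top) : Prop :=
  path_connected X /\
  forall (x : X) g, is_loop_at g x -> path_homotopic g (const_path x).

Definition evenly_covered {E Z : Top} (p : E -> Z) (V : Z -> Prop) : Prop :=
  exists F : (E -> Prop) -> Prop,
    (forall S, F S -> is_open S) /\
    (forall S S', F S -> F S' -> (forall e, S e <-> S' e) \/ (forall e, ~ (S e /\ S' e))) /\
    (forall e, V (p e) <-> exists S, F S /\ S e) /\
    (forall S, F S -> exists s : Z -> E,
        continuous_on V s /\
        (forall z, V z -> S (s z) /\ p (s z) = z) /\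
        (forall e, S e -> s (p e) = e)).

Definition covering_map {E Z : Top} (p : E -> Z) : Prop :=
  continuous p /\ (forall z, exists e, p e = z) /\
  forall z : Z, exists V, is_open V /\ V z /\ evenly_covered p V.

Definition universal_covering {E Z : Top} (p : E -> Z) : Prop :=
  covering_map p /\ simply_connected E.

(** * Sectional category, cat_1, TC^D  (as "<= n" predicates; values may be infinite) *)
Definition secat_le {E Z : Top} (p : E -> Z) (n : nat) : Prop :=
  exists U : nat -> (Z -> Prop),
    (forall i, (i <= n)%nat -> is_open (U i)) /\
    (forall z, exists i, (i <= n)%nat /\ U i z) /\
    (forall i, (i <= n)%nat -> exists s : Z -> E,
        continuous_on (U i) s /\ forall z, U i z -> p (s z) = z).

Definition cat1_le (Z : Top) (n : nat) : Prop :=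
  exists (E : Top) (p : E -> Z), universal_covering p /\ secat_le p n.

(** pi_1(U_i,u) -> pi_1(X x X,u) = pi_1(X,a) x pi_1(X,b) (u = (a,b)) lands in a
    conjugate of the diagonal. Conjugates of the diagonal are exactly the graphs
    of the isomorphisms [g] |-> [c]^{-1}[g][c], c a path from a to b. *)
Definition diag_conj_condition (X : Top) (U : prodTop X X -> Prop) (u : prodTop X X) : Prop :=
  exists c : R -> X, path_from_to c (fst u) (snd u) /\
    forall l : R -> prodTop X X, is_loop_at l u -> path_in U l ->
      path_homotopic (fun t => snd (l t))
                     (concat (concat (rev_path c) (fun t => fst (l t))) c).

Definition TCD_le (X : Top) (k : nat) : Prop :=
  exists U : nat -> (prodTop X X -> Prop),
    (forall i, (i <= k)%nat -> is_open (U i)) /\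
    (forall u, exists i, (i <= k)%nat /\ U i u) /\
    (forall i, (i <= k)%nat -> forall u, U i u -> diag_conj_condition X (U i) u).

(* Main.v *)
Require Import Defs.
From Stdlib Require Import Reals Lra Lia Psatz.
From Stdlib Require Import ClassicalEpsilon FunctionalExtensionality PropExtensionality Classical ProofIrrelevance.
Open Scope R_scope.

Definition ropen (U : R -> Prop) : Prop :=
  forall x, U x -> exists e, 0 < e /\ forall y, Rabs (y - x) < e -> U y.

Lemma ropen_full : ropen (fun _ => True).
Proof. intros x _. exists 1; split; [lra|auto]. Qed.

Lemma ropen_inter U V : ropen U -> ropen V -> ropen (fun x => U x /\ V x).
Proof.
  intros HU HV x [Ux Vx].
  destruct (HU x Ux) as [e1 [e1p H1]]. destruct (HV x Vx) as [e2 [e2p H2]].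
  exists (Rmin e1 e2); split. apply Rmin_pos; auto.
  intros y Hy; split; [apply H1|apply H2];
  eapply Rlt_le_trans; eauto; [apply Rmin_l|apply Rmin_r].
Qed.

Lemma ropen_union (F : (R -> Prop) -> Prop) :
  (forall U, F U -> ropen U) -> ropen (fun x => exists U, F U /\ U x).
Proof.
  intros HF x [U [FU Ux]]. destruct (HF U FU x Ux) as [e [ep H]].
  exists e; split; auto. intros y Hy. exists U; auto.
Qed.

Definition RTop : Top := MkTop R ropen ropen_full ropen_inter ropen_union.

Definition rp (a : R -> R) : Prop :=
  @is_path RTop a /\ forall t, I01 t -> I01 (a t).

Lemma rpath_cont (a : R -> R) : @is_path RTop a ->
  forall t, I01 t -> forall e, 0 < e -> exists d, 0 < d /\
    forall t', I01 t' -> Rabs (t' - t) < d -> Rabs (a t' - a t) < e.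
Proof.
  intros Ha t It e ep.
  assert (Ho : @is_open RTop (fun y => Rabs (y - a t) < e)).
  { simpl. intros y Hy. exists (e - Rabs (y - a t)); split; [lra|].
    intros z Hz.
    replace (z - a t) with ((z - y) + (y - a t)) by ring.
    eapply Rle_lt_trans; [apply Rabs_triang|]. lra. }
  destruct (Ha t It _ Ho) as [d [dp Hd]].
  { simpl. unfold Rminus. rewrite Rplus_opp_r, Rabs_R0. auto. }
  exists d; split; auto.
Qed.

Lemma rpath_intro (a : R -> R) :
  (forall t, I01 t -> forall e, 0 < e -> exists d, 0 < d /\
    forall t', I01 t' -> Rabs (t' - t) < d -> Rabs (a t' - a t) < e) ->
  @is_path RTop a.
Proof.
  intros H t It V HV Vt. simpl in HV.
  destruct (HV _ Vt) as [e [ep He]].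
  destruct (H t It e ep) as [d [dp Hd]].
  exists d; split; auto.
Qed.

Lemma rpath_lip (a : R -> R) (M : R) : 0 <= M ->
  (forall u v, Rabs (a u - a v) <= M * Rabs (u - v)) -> @is_path RTop a.
Proof.
  intros HM H. apply rpath_intro. intros t It e ep.
  exists (e / (M + 1)); split.
  { apply Rdiv_lt_0_compat; lra. }
  intros t' It' Ht. eapply Rle_lt_trans; [apply H|].
  assert (Rabs (t' - t) * (M + 1) < e).
  { apply (Rmult_lt_compat_r (M+1)) in Ht; [|lra].
    unfold Rdiv in Ht. rewrite Rmult_assoc, Rinv_l in Ht; lra. }
  assert (0 <= Rabs (t' - t)) by apply Rabs_pos.
  nra.
Qed.

Definition seg (a b : R) : R -> R := fun u => a + u * (b - a).

Lemma rp_seg a b : I01 a -> I01 b -> rp (seg a b).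
Proof.
  intros Ia Ib; split.
  - apply (rpath_lip _ (Rabs (b - a))). apply Rabs_pos.
    intros u v. unfold seg. replace (a + u * (b - a) - (a + v * (b - a))) with ((b - a) * (u - v)) by ring.
    rewrite Rabs_mult. lra.
  - intros t It. unfold seg, I01 in *. split; nra.
Qed.

Lemma rp_const c : I01 c -> rp (fun _ => c).
Proof.
  intros Ic; split; auto.
  apply (rpath_lip _ 0); [lra|]. intros. unfold Rminus. rewrite Rplus_opp_r, Rabs_R0.
  assert (0 <= Rabs (u + - v)) by apply Rabs_pos. lra.
Qed.

Lemma rp_id : rp (fun t => t).
Proof.
  split; auto. apply (rpath_lip _ 1); [lra|]. intros; lra.
Qed.

Definition cont2 {X : Top} (H : R -> R -> X) : Prop :=
  forall s t, I01 s -> I01 t -> forall V : X -> Prop, is_open V -> V (H s t) ->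
    exists d, 0 < d /\ forall s' t', I01 s' -> I01 t' ->
      Rabs (s' - s) < d -> Rabs (t' - t) < d -> V (H s' t').

Section Gen.
Context {X : Top}.

Lemma path_cont2 (g : R -> X) : is_path g -> cont2 (fun _ t => g t).
Proof.
  intros Hg s t Is It V HV Vt. destruct (Hg t It V HV Vt) as [d [dp Hd]].
  exists d; split; auto.
Qed.

Lemma cont2_path_t (H : R -> R -> X) s : cont2 H -> I01 s -> is_path (fun t => H s t).
Proof.
  intros HH Is t It V HV Vt. destruct (HH s t Is It V HV Vt) as [d [dp Hd]].
  exists d; split; auto. intros t' It' Ht. apply Hd; auto.
  unfold Rminus; rewrite Rplus_opp_r, Rabs_R0; auto.
Qed.

Lemma cont2_swap (H : R -> R -> X) : cont2 H -> cont2 (fun s t => H t s).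
Proof.
  intros HH s t Is It V HV Vt. destruct (HH t s It Is V HV Vt) as [d [dp Hd]].
  exists d; split; auto.
Qed.

Lemma cont2_path_s (H : R -> R -> X) t : cont2 H -> I01 t -> is_path (fun s => H s t).
Proof. intros HH It. apply (cont2_path_t (fun s t => H t s)); auto. apply cont2_swap; auto. Qed.

Lemma I01_2s s : I01 s -> s <= 1/2 -> I01 (2 * s).
Proof. unfold I01; lra. Qed.
Lemma I01_2s1 s : I01 s -> ~ s <= 1/2 -> I01 (2 * s - 1).
Proof. unfold I01; lra. Qed.

Lemma glue_s (A B : R -> R -> X) : cont2 A -> cont2 B ->
  (forall t, I01 t -> A 1 t = B 0 t) ->
  cont2 (fun s t => if Rle_dec s (1/2) then A (2 * s) t else B (2 * s - 1) t).
Proof.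
  intros HA HB Hm s t Is It V HV Vt.
  destruct (Rtotal_order s (1/2)) as [Hlt|[Heq|Hgt]].
  - destruct (Rle_dec s (1/2)); [|lra].
    destruct (HA (2*s) t (I01_2s s Is r) It V HV Vt) as [d [dp Hd]].
    exists (Rmin (d/2) (1/2 - s)); split.
    { apply Rmin_pos; lra. }
    intros s' t' Is' It' Hs Ht.
    pose proof (Rmin_l (d/2) (1/2 - s)). pose proof (Rmin_r (d/2) (1/2 - s)).
    apply Rabs_def2 in Hs.
    destruct (Rle_dec s' (1/2)); [|lra].
    apply Hd; auto. apply I01_2s; auto.
    apply Rabs_def1; lra. lra.
  - subst s. destruct (Rle_dec (1/2) (1/2)); [|lra].
    replace (2 * (1/2)) with 1 in Vt by lra.
    destruct (HA 1 t ltac:(unfold I01; lra) It V HV Vt) as [d1 [d1p H1]].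
    rewrite Hm in Vt by auto.
    destruct (HB 0 t ltac:(unfold I01; lra) It V HV Vt) as [d2 [d2p H2]].
    exists (Rmin (d1/2) (d2/2)); split.
    { apply Rmin_pos; lra. }
    intros s' t' Is' It' Hs Ht.
    pose proof (Rmin_l (d1/2) (d2/2)). pose proof (Rmin_r (d1/2) (d2/2)).
    apply Rabs_def2 in Hs.
    destruct (Rle_dec s' (1/2)).
    + apply H1; auto. apply I01_2s; auto. apply Rabs_def1; lra. lra.
    + apply H2; auto. apply I01_2s1; auto. apply Rabs_def1; lra. lra.
  - destruct (Rle_dec s (1/2)); [lra|].
    destruct (HB (2*s-1) t (I01_2s1 s Is n) It V HV Vt) as [d [dp Hd]].
    exists (Rmin (d/2) (s - 1/2)); split.
    { apply Rmin_pos; lra. }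
    intros s' t' Is' It' Hs Ht.
    pose proof (Rmin_l (d/2) (s - 1/2)). pose proof (Rmin_r (d/2) (s - 1/2)).
    apply Rabs_def2 in Hs.
    destruct (Rle_dec s' (1/2)); [lra|].
    apply Hd; auto. apply I01_2s1; auto.
    apply Rabs_def1; lra. lra.
Qed.

Lemma glue_t (A B : R -> R -> X) : cont2 A -> cont2 B ->
  (forall s, I01 s -> A s 1 = B s 0) ->
  cont2 (fun s t => if Rle_dec t (1/2) then A s (2 * t) else B s (2 * t - 1)).
Proof.
  intros HA HB Hm.
  apply (cont2_swap (fun t s => if Rle_dec t (1/2) then A s (2 * t) else B s (2 * t - 1))).
  apply (glue_s (fun t s => A s t) (fun t s => B s t)); try apply cont2_swap; auto.
Qed.

Lemma path_ext (g h : R -> X) : is_path g -> (forall t, I01 t -> g t = h t) -> is_path h.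
Proof.
  intros Hg E t It V HV Vt. rewrite <- E in Vt by auto.
  destruct (Hg t It V HV Vt) as [d [dp Hd]]. exists d; split; auto.
  intros t' It' Ht. rewrite <- E by auto. auto.
Qed.

Lemma concat_path (g h : R -> X) : is_path g -> is_path h -> g 1 = h 0 -> is_path (concat g h).
Proof.
  intros Hg Hh E.
  pose proof (glue_s (fun s _ => g s) (fun s _ => h s)) as G.
  refine (cont2_path_s _ 0 (G _ _ _) _).
  - intros s t Is It V HV Vt. destruct (Hg s Is V HV Vt) as [d [dp Hd]]. exists d; split; auto.
  - intros s t Is It V HV Vt. destruct (Hh s Is V HV Vt) as [d [dp Hd]]. exists d; split; auto.
  - auto.
  - unfold I01; lra.
Qed.

Lemma rev_path_ok (g : R -> X) : is_path g -> is_path (rev_path g).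
Proof.
  intros Hg t It V HV Vt. unfold rev_path in *.
  destruct (Hg (1 - t) ltac:(unfold I01 in *; lra) V HV Vt) as [d [dp Hd]].
  exists d; split; auto. intros t' It' Ht. apply Hd. unfold I01 in *; lra.
  replace (1 - t' - (1 - t)) with (- (t' - t)) by ring. rewrite Rabs_Ropp; auto.
Qed.

Lemma const_path_ok (x : X) : is_path (const_path x).
Proof. intros t It V HV Vt. exists 1; split; [lra|]. auto. Qed.

Lemma concat_0 (g h : R -> X) : concat g h 0 = g 0.
Proof. unfold concat. destruct (Rle_dec 0 (1/2)); [|lra]. f_equal; lra. Qed.
Lemma concat_1 (g h : R -> X) : concat g h 1 = h 1.
Proof. unfold concat. destruct (Rle_dec 1 (1/2)); [lra|]. f_equal; lra. Qed.
Lemma rev_0 (g : R -> X) : rev_path g 0 = g 1.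
Proof. unfold rev_path. f_equal; lra. Qed.
Lemma rev_1 (g : R -> X) : rev_path g 1 = g 0.
Proof. unfold rev_path. f_equal; lra. Qed.

Lemma path_in_concat (W : X -> Prop) g h : path_in W g -> path_in W h -> g 1 = h 0 -> path_in W (concat g h).
Proof.
  intros [Pg Wg] [Ph Wh] E. split. apply concat_path; auto.
  intros t It. unfold concat. destruct (Rle_dec t (1/2)).
  apply Wg. apply I01_2s; auto. apply Wh. apply I01_2s1; auto.
Qed.

Lemma path_in_rev (W : X -> Prop) g : path_in W g -> path_in W (rev_path g).
Proof.
  intros [Pg Wg]. split. apply rev_path_ok; auto.
  intros t It. unfold rev_path. apply Wg. unfold I01 in *; lra.
Qed.

Lemma path_in_const (W : X -> Prop) x : W x -> path_in W (const_path x).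
Proof. intros. split. apply const_path_ok. intros; auto. Qed.

Lemma comp_path {Y : Top} (f : X -> Y) g : continuous f -> is_path g -> is_path (fun t => f (g t)).
Proof.
  intros Hf Hg t It V HV Vt. destruct (Hg t It _ (Hf V HV) Vt) as [d [dp Hd]].
  exists d; split; auto.
Qed.

Lemma hom_refl (g : R -> X) : is_path g -> path_homotopic g g.
Proof.
  intros Hg. exists (fun _ t => g t). split; [|split; [|split]]; auto. apply path_cont2; auto.
Qed.

Lemma hom_cont (g h : R -> X) : path_homotopic g h -> exists H, cont2 H /\
    (forall t, I01 t -> H 0 t = g t) /\ (forall t, I01 t -> H 1 t = h t) /\
    (forall s, I01 s -> H s 0 = g 0 /\ H s 1 = g 1).
Proof. intros [H HH]. exists H. exact HH. Qed.

Lemma hom_ends (g h : R -> X) : path_homotopic g h ->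
  is_path g /\ is_path h /\ h 0 = g 0 /\ h 1 = g 1.
Proof.
  intros [H [HC [H0 [H1 Hb]]]].
  assert (I0 : I01 0) by (unfold I01; lra). assert (I1 : I01 1) by (unfold I01; lra).
  split; [|split; [|split]].
  - apply (path_ext (fun t => H 0 t)); auto. apply cont2_path_t; auto.
  - apply (path_ext (fun t => H 1 t)); auto. apply cont2_path_t; auto.
  - rewrite <- H1 by auto. apply Hb; auto.
  - rewrite <- H1 by auto. apply Hb; auto.
Qed.

Lemma hom_sym (g h : R -> X) : path_homotopic g h -> path_homotopic h g.
Proof.
  intros Hgh. destruct (hom_ends _ _ Hgh) as [_ [_ [E0 E1]]].
  destruct Hgh as [H [HC [H0 [H1 Hb]]]].
  exists (fun s t => H (1 - s) t). split; [|split; [|split]].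
  - intros s t Is It V HV Vt.
    destruct (HC (1 - s) t ltac:(unfold I01 in *; lra) It V HV Vt) as [d [dp Hd]].
    exists d; split; auto. intros s' t' Is' It' Hs Ht. apply Hd; auto. unfold I01 in *; lra.
    replace (1 - s' - (1 - s)) with (- (s' - s)) by ring. rewrite Rabs_Ropp; auto.
  - intros t It. replace (1 - 0) with 1 by ring. auto.
  - intros t It. replace (1 - 1) with 0 by ring. auto.
  - intros s Is. split.
    rewrite E0. apply Hb. unfold I01 in *; lra.
    rewrite E1. apply Hb. unfold I01 in *; lra.
Qed.

Lemma hom_trans (f g h : R -> X) : path_homotopic f g -> path_homotopic g h -> path_homotopic f h.
Proof.
  intros Hfg Hgh. destruct (hom_ends _ _ Hfg) as [_ [_ [E0 E1]]].
  destruct Hfg as [A [AC [A0 [A1 Ab]]]]. destruct Hgh as [B [BC [B0 [B1 Bb]]]].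
  exists (fun s t => if Rle_dec s (1/2) then A (2 * s) t else B (2 * s - 1) t).
  split; [|split; [|split]].
  - apply glue_s; auto. intros t It. rewrite A1, B0; auto.
  - intros t It. destruct (Rle_dec 0 (1/2)); [|lra]. rewrite Rmult_0_r. auto.
  - intros t It. destruct (Rle_dec 1 (1/2)); [lra|]. replace (2 * 1 - 1) with 1 by ring. auto.
  - intros s Is. split; destruct (Rle_dec s (1/2)).
    apply Ab. apply I01_2s; auto.
    rewrite <- E0. apply Bb. apply I01_2s1; auto.
    apply Ab. apply I01_2s; auto.
    rewrite <- E1. apply Bb. apply I01_2s1; auto.
Qed.

Lemma hom_ext_r (g h h' : R -> X) : path_homotopic g h -> (forall t, I01 t -> h t = h' t) ->
  path_homotopic g h'.
Proof.
  intros [H [HC [H0 [H1 Hb]]]] E. exists H. split; [|split; [|split]]; auto.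
  intros t It. rewrite H1; auto.
Qed.

Lemma hom_ext_l (g g' h : R -> X) : path_homotopic g h -> (forall t, I01 t -> g t = g' t) ->
  path_homotopic g' h.
Proof.
  intros Hgh E. apply hom_sym. apply (hom_ext_r _ g); auto. apply hom_sym; auto.
Qed.

Lemma concat_cong (g g' h h' : R -> X) : path_homotopic g g' -> path_homotopic h h' ->
  g 1 = h 0 -> path_homotopic (concat g h) (concat g' h').
Proof.
  intros Hg Hh E.
  destruct Hg as [A [AC [A0 [A1 Ab]]]]. destruct Hh as [B [BC [B0 [B1 Bb]]]].
  exists (fun s t => if Rle_dec t (1/2) then A s (2 * t) else B s (2 * t - 1)).
  split; [|split; [|split]].
  - apply glue_t; auto. intros s Is. destruct (Ab s Is). destruct (Bb s Is). congruence.
  - intros t It. unfold concat. destruct (Rle_dec t (1/2)).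
    apply A0, I01_2s; auto. apply B0, I01_2s1; auto.
  - intros t It. unfold concat. destruct (Rle_dec t (1/2)).
    apply A1, I01_2s; auto. apply B1, I01_2s1; auto.
  - intros s Is. split.
    rewrite concat_0. destruct (Rle_dec 0 (1/2)); [|lra]. rewrite Rmult_0_r. apply Ab; auto.
    rewrite concat_1. destruct (Rle_dec 1 (1/2)); [lra|].
    replace (2 * 1 - 1) with 1 by ring. apply Bb; auto.
Qed.

End Gen.

Definition mix (s a b : R) : R := a + s * (b - a).

Lemma mix_I s a b : I01 s -> I01 a -> I01 b -> I01 (mix s a b).
Proof. unfold I01, mix. intros. split; nra. Qed.

Lemma mix_close s s' a a' b b' e : I01 s -> I01 s' -> I01 a -> I01 b ->
  Rabs (s' - s) < e -> Rabs (a' - a) < e -> Rabs (b' - b) < e ->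
  Rabs (mix s' a' b' - mix s a b) < 3 * e.
Proof.
  unfold I01, mix. intros Is Is' Ia Ib H1 H2 H3.
  apply Rabs_def2 in H1. apply Rabs_def2 in H2. apply Rabs_def2 in H3.
  apply Rabs_def1; nra.
Qed.

Lemma G1 {X : Top} (F : R -> R -> X) a1 a2 b1 b2 : cont2 F ->
  rp a1 -> rp a2 -> rp b1 -> rp b2 ->
  a1 0 = b1 0 -> a2 0 = b2 0 -> a1 1 = b1 1 -> a2 1 = b2 1 ->
  path_homotopic (fun t => F (a1 t) (a2 t)) (fun t => F (b1 t) (b2 t)).
Proof.
  intros HF [Pa1 Ia1] [Pa2 Ia2] [Pb1 Ib1] [Pb2 Ib2] E1 E2 E3 E4.
  exists (fun s t => F (mix s (a1 t) (b1 t)) (mix s (a2 t) (b2 t))).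
  split; [|split; [|split]].
  - intros s t Is It V HV Vt.
    destruct (HF _ _ (mix_I s _ _ Is (Ia1 t It) (Ib1 t It)) (mix_I s _ _ Is (Ia2 t It) (Ib2 t It)) V HV Vt)
      as [d [dp Hd]].
    assert (e3 : 0 < d / 3) by lra.
    destruct (rpath_cont _ Pa1 t It _ e3) as [d1 [d1p H1]].
    destruct (rpath_cont _ Pa2 t It _ e3) as [d2 [d2p H2]].
    destruct (rpath_cont _ Pb1 t It _ e3) as [d3 [d3p H3]].
    destruct (rpath_cont _ Pb2 t It _ e3) as [d4 [d4p H4]].
    set (m := Rmin (Rmin (d/3) d1) (Rmin (Rmin d2 d3) d4)).
    assert (m1 : m <= d/3) by (unfold m; repeat (eapply Rle_trans; [apply Rmin_l|]); lra).
    assert (m2 : m <= d1) by (unfold m; eapply Rle_trans; [apply Rmin_l|]; apply Rmin_r).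
    assert (m3 : m <= d2) by (unfold m; eapply Rle_trans; [apply Rmin_r|];
                               eapply Rle_trans; apply Rmin_l).
    assert (m4 : m <= d3) by (unfold m; eapply Rle_trans; [apply Rmin_r|];
                               eapply Rle_trans; [apply Rmin_l|]; apply Rmin_r).
    assert (m5 : m <= d4) by (unfold m; eapply Rle_trans; [apply Rmin_r|]; apply Rmin_r).
    assert (mp : 0 < m) by (unfold m; repeat apply Rmin_pos; lra).
    exists m; split; auto.
    intros s' t' Is' It' Hs Ht.
    apply Hd; auto using mix_I.
    + replace d with (3 * (d/3)) by field.
      apply mix_close; auto. lra. apply H1; auto; lra. apply H3; auto; lra.
    + replace d with (3 * (d/3)) by field.
      apply mix_close; auto. lra. apply H2; auto; lra. apply H4; auto; lra.
  - intros t It. unfold mix. f_equal; ring.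
  - intros t It. unfold mix. f_equal; ring.
  - intros s Is. unfold mix. rewrite E1, E2, E3, E4. split; f_equal; ring.
Qed.

Lemma G1_path {X : Top} (F : R -> R -> X) a1 a2 : cont2 F -> rp a1 -> rp a2 ->
  is_path (fun t => F (a1 t) (a2 t)).
Proof.
  intros. apply (hom_ends (fun t => F (a1 t) (a2 t)) (fun t => F (a1 t) (a2 t))). apply G1; auto.
Qed.

Lemma reparam {X : Top} (g : R -> X) phi psi : is_path g -> rp phi -> rp psi ->
  phi 0 = psi 0 -> phi 1 = psi 1 ->
  path_homotopic (fun t => g (phi t)) (fun t => g (psi t)).
Proof.
  intros Hg Hphi Hpsi E0 E1.
  exact (G1 (fun _ t => g t) (fun _ => 0) phi (fun _ => 0) psi (path_cont2 g Hg)
           (rp_const 0 ltac:(unfold I01; lra)) Hphi (rp_const 0 ltac:(unfold I01; lra)) Hpsi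
           eq_refl E0 eq_refl E1).
Qed.

Lemma rp_concat a b : rp a -> rp b -> a 1 = b 0 -> rp (@concat RTop a b).
Proof.
  intros [Pa Ia] [Pb Ib] E. split.
  - apply concat_path; auto.
  - intros t It. unfold concat. destruct (Rle_dec t (1/2)).
    apply Ia, I01_2s; auto. apply Ib, I01_2s1; auto.
Qed.

Lemma rp_rev a : rp a -> rp (@rev_path RTop a).
Proof.
  intros [Pa Ia]. split. apply rev_path_ok; auto.
  intros t It. unfold rev_path. apply Ia. unfold I01 in *; lra.
Qed.

Lemma I0 : I01 0. Proof. unfold I01; lra. Qed.
Lemma I1 : I01 1. Proof. unfold I01; lra. Qed.
Lemma Ihalf : I01 (1/2). Proof. unfold I01; lra. Qed.

Section Groupoid.
Context {X : Top}.

Lemma lunit (g : R -> X) : is_path g -> path_homotopic (concat (const_path (g 0)) g) g.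
Proof.
  intros Hg.
  assert (E : concat (const_path (g 0)) g = fun t => g (@concat RTop (fun _ => 0) (fun t => t) t)).
  { apply functional_extensionality; intro t. unfold concat, const_path.
    destruct (Rle_dec t (1/2)); reflexivity. }
  rewrite E. apply (reparam g _ (fun t => t)); auto.
  apply rp_concat; auto using rp_const, rp_id, I0.
  apply rp_id. apply (concat_0 (X:=RTop)). apply (concat_1 (X:=RTop)).
Qed.

Lemma runit (g : R -> X) : is_path g -> path_homotopic (concat g (const_path (g 1))) g.
Proof.
  intros Hg.
  assert (E : concat g (const_path (g 1)) = fun t => g (@concat RTop (fun t => t) (fun _ => 1) t)).
  { apply functional_extensionality; intro t. unfold concat, const_path.
    destruct (Rle_dec t (1/2)); reflexivity. }
  rewrite E. apply (reparam g _ (fun t => t)); auto.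
  apply rp_concat; auto using rp_const, rp_id, I1.
  apply rp_id. apply (concat_0 (X:=RTop)). apply (concat_1 (X:=RTop)).
Qed.

Lemma rinv (g : R -> X) : is_path g -> path_homotopic (concat g (rev_path g)) (const_path (g 0)).
Proof.
  intros Hg.
  assert (E : concat g (rev_path g) = fun t => g (@concat RTop (fun t => t) (@rev_path RTop (fun t => t)) t)).
  { apply functional_extensionality; intro t. unfold concat, rev_path.
    destruct (Rle_dec t (1/2)); reflexivity. }
  rewrite E. unfold const_path. apply (reparam g _ (fun _ => 0)); auto.
  apply rp_concat; auto using rp_rev, rp_id. unfold rev_path; lra.
  apply rp_const, I0. apply (concat_0 (X:=RTop)).
  rewrite (concat_1 (X:=RTop)). unfold rev_path; lra.
Qed.

Lemma linv (g : R -> X) : is_path g -> path_homotopic (concat (rev_path g) g) (const_path (g 1)).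
Proof.
  intros Hg.
  assert (E : concat (rev_path g) g = fun t => g (@concat RTop (@rev_path RTop (fun t => t)) (fun t => t) t)).
  { apply functional_extensionality; intro t. unfold concat, rev_path.
    destruct (Rle_dec t (1/2)); reflexivity. }
  rewrite E. unfold const_path. apply (reparam g _ (fun _ => 1)); auto.
  apply rp_concat; auto using rp_rev, rp_id. unfold rev_path; lra.
  apply rp_const, I1. rewrite (concat_0 (X:=RTop)). unfold rev_path; lra.
  apply (concat_1 (X:=RTop)).
Qed.

Lemma assoc (f g h : R -> X) : is_path f -> is_path g -> is_path h -> f 1 = g 0 -> g 1 = h 0 ->
  path_homotopic (concat (concat f g) h) (concat f (concat g h)).
Proof.
  intros Hf Hg Hh E1 E2.
  set (k := concat f (concat g h)).
  set (phi := @concat RTop (@concat RTop (seg 0 (1/2)) (seg (1/2) (3/4))) (seg (3/4) 1)).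
  assert (E : concat (concat f g) h = fun t => k (phi t)).
  { apply functional_extensionality; intro t. unfold k, phi, concat, seg.
    destruct (Rle_dec t (1/2)); destruct (Rle_dec (2 * t) (1/2));
    repeat match goal with |- context [Rle_dec ?a ?b] => destruct (Rle_dec a b) end;
    try (exfalso; lra); f_equal; lra. }
  rewrite E. apply (reparam k phi (fun t => t)).
  - unfold k. apply concat_path; auto. apply concat_path; auto. rewrite concat_0; auto.
  - unfold phi. apply rp_concat. apply rp_concat. apply rp_seg; unfold I01; lra.
    apply rp_seg; unfold I01; lra. unfold seg; lra. apply rp_seg; unfold I01; lra.
    rewrite (concat_1 (X:=RTop)). unfold seg; lra.
  - apply rp_id.
  - unfold phi. rewrite !(concat_0 (X:=RTop)). unfold seg; lra.
  - unfold phi. rewrite !(concat_1 (X:=RTop)). unfold seg; lra.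
Qed.

End Groupoid.

Section Alg.
Context {X : Top}.
Implicit Types f g h k a : R -> X.

Lemma rev_path_rev g : rev_path (rev_path g) = g.
Proof. apply functional_extensionality; intro t. unfold rev_path. f_equal; ring. Qed.

Lemma hom_const_ext g x : path_homotopic g (const_path x) -> g 0 = x.
Proof. intros H. destruct (hom_ends _ _ H) as [_ [_ [E _]]]. rewrite <- E. reflexivity. Qed.

Ltac ptac := repeat first [ assumption | apply concat_path | apply rev_path_ok | apply const_path_ok
  | rewrite concat_0 | rewrite concat_1 | rewrite rev_0 | rewrite rev_1 | reflexivity ].

Lemma cancel_l a g h : is_path a -> is_path g -> is_path h -> a 1 = g 0 -> a 1 = h 0 ->
  path_homotopic (concat a g) (concat a h) -> path_homotopic g h.
Proof.
  intros Ha Hg Hh Eg Eh H.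
  apply hom_trans with (concat (const_path (g 0)) g). apply hom_sym, lunit; auto.
  apply hom_trans with (concat (concat (rev_path a) a) g).
  { apply concat_cong. rewrite <- Eg. apply hom_sym, linv; auto. apply hom_refl; auto. ptac; auto. }
  apply hom_trans with (concat (rev_path a) (concat a g)).
  { apply assoc; ptac; auto. }
  apply hom_trans with (concat (rev_path a) (concat a h)).
  { apply concat_cong; auto. apply hom_refl; ptac. ptac. }
  apply hom_trans with (concat (concat (rev_path a) a) h).
  { apply hom_sym, assoc; ptac; auto. }
  apply hom_trans with (concat (const_path (h 0)) h).
  { apply concat_cong. rewrite <- Eh. apply linv; auto. apply hom_refl; auto. ptac; auto. }
  apply lunit; auto.
Qed.

Lemma move_r g h k : is_path g -> is_path h -> g 1 = h 0 ->
  path_homotopic (concat g h) k -> path_homotopic g (concat k (rev_path h)).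
Proof.
  intros Hg Hh E H.
  apply hom_trans with (concat g (const_path (g 1))). apply hom_sym, runit; auto.
  apply hom_trans with (concat g (concat h (rev_path h))).
  { apply concat_cong. apply hom_refl; auto. rewrite E. apply hom_sym, rinv; auto. ptac. }
  apply hom_trans with (concat (concat g h) (rev_path h)).
  { apply hom_sym, assoc; ptac; auto. }
  apply concat_cong; auto. apply hom_refl; ptac. ptac.
Qed.

Lemma loop_trivial g h : is_path g -> is_path h -> g 1 = h 1 ->
  path_homotopic (concat g (rev_path h)) (const_path (g 0)) -> path_homotopic g h.
Proof.
  intros Hg Hh E H.
  assert (E' : g 1 = rev_path h 0) by (rewrite rev_0; auto).
  pose proof (move_r g (rev_path h) _ Hg (rev_path_ok h Hh) E' H) as H2.
  rewrite rev_path_rev in H2.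
  apply hom_trans with (1 := H2).
  assert (E0 : g 0 = h 0).
  { destruct (hom_ends _ _ H) as [_ [_ [_ E1]]]. rewrite concat_1, rev_1 in E1. auto. }
  rewrite E0. apply lunit; auto.
Qed.

Lemma conj_trivial (c l : R -> X) : is_path c -> is_path l -> c 0 = l 0 -> l 1 = l 0 ->
  path_homotopic (const_path (c 1)) (concat (concat (rev_path c) l) c) ->
  path_homotopic l (const_path (l 0)).
Proof.
  intros Hc Hl E0 E1 H.
  apply hom_sym in H.
  assert (Hrl : is_path (concat (rev_path c) l)) by (apply concat_path; ptac; congruence).
  assert (E2 : concat (rev_path c) l 1 = c 0) by (rewrite concat_1; congruence).
  pose proof (move_r _ c _ Hrl Hc E2 H) as H2.
  apply (cancel_l (rev_path c)); ptac; auto; try (rewrite rev_1; auto).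
  apply hom_trans with (1 := H2).
  apply hom_trans with (rev_path c).
  { unfold const_path at 1. rewrite <- (rev_0 c). apply lunit. ptac. }
  rewrite <- E0. rewrite <- (rev_1 c). apply hom_sym, runit. ptac.
Qed.

Lemma conj_of_trivial (c l lp : R -> X) : is_path c -> c 0 = l 0 -> c 1 = lp 0 ->
  path_homotopic l (const_path (l 0)) -> path_homotopic lp (const_path (lp 0)) ->
  path_homotopic lp (concat (concat (rev_path c) l) c).
Proof.
  intros Hc E0 E1 Hl Hl'.
  destruct (hom_ends _ _ Hl) as [Pl _]. 
  apply hom_trans with (1 := Hl'). apply hom_sym.
  apply hom_trans with (concat (concat (rev_path c) (const_path (l 0))) c).
  { apply concat_cong. apply concat_cong. apply hom_refl; ptac. auto. rewrite rev_1; auto.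
    apply hom_refl; auto. rewrite concat_1. destruct (hom_ends _ _ Hl) as [_ [_ [_ E]]].
    rewrite <- E. unfold const_path. auto. }
  apply hom_trans with (concat (rev_path c) c).
  { apply concat_cong. rewrite <- E0, <- (rev_1 c). apply runit; ptac. apply hom_refl; auto.
    rewrite concat_1. unfold const_path. auto. }
  rewrite <- E1. apply linv; auto.
Qed.

End Alg.

Lemma path_in_mono {X : Top} (U V : X -> Prop) g : (forall x, U x -> V x) -> path_in U g -> path_in V g.
Proof. intros HUV [Pg Ug]. split; auto. Qed.

Definition weakgood {X : Top} (W : X -> Prop) : Prop :=
  forall d d', path_in W d -> path_in W d' -> d 0 = d' 0 -> d 1 = d' 1 -> path_homotopic d d'.

Section Cover.
Context {X : Top} (x0 : X).

Definition pf (g : R -> X) : Prop := is_path g /\ g 0 = x0.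
Definition hcls (g : R -> X) : (R -> X) -> Prop := fun h => path_homotopic g h.
Definition Ecar : Type := { c : (R -> X) -> Prop | exists g, pf g /\ c = hcls g }.

Lemma pf_const : pf (const_path x0).
Proof. split; [apply const_path_ok|reflexivity]. Qed.

Definition e0 : Ecar := exist _ (hcls (const_path x0)) (ex_intro _ _ (conj pf_const eq_refl)).

Definition clsE (g : R -> X) : Ecar :=
  match excluded_middle_informative (pf g) with
  | left H => exist _ (hcls g) (ex_intro _ g (conj H eq_refl))
  | right _ => e0
  end.

Definition repE (e : Ecar) : R -> X :=
  proj1_sig (constructive_indefinite_description _ (proj2_sig e)).

Lemma repE_spec e : pf (repE e) /\ proj1_sig e = hcls (repE e).
Proof. unfold repE. destruct (constructive_indefinite_description _ _) as [g Hg]. simpl. exact Hg. Qed.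

Lemma rep_pf e : pf (repE e).
Proof. apply repE_spec. Qed.

Lemma hcls_eq g h : path_homotopic g h -> hcls g = hcls h.
Proof.
  intros H. apply functional_extensionality; intro k. apply propositional_extensionality.
  unfold hcls; split; intro H'.
  - apply hom_trans with g; auto. apply hom_sym; auto.
  - apply hom_trans with h; auto.
Qed.

Lemma clsE_eq g h : pf g -> pf h -> path_homotopic g h -> clsE g = clsE h.
Proof.
  intros Pg Ph H. unfold clsE.
  destruct (excluded_middle_informative (pf g)); [|contradiction].
  destruct (excluded_middle_informative (pf h)); [|contradiction].
  apply subset_eq_compat. apply hcls_eq; auto.
Qed.

Lemma proj_clsE g : pf g -> proj1_sig (clsE g) = hcls g.
Proof. intros Pg. unfold clsE. destruct (excluded_middle_informative (pf g)); [|contradiction]. reflexivity. Qed.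

Lemma clsE_inj g h : pf g -> pf h -> clsE g = clsE h -> path_homotopic g h.
Proof.
  intros Pg Ph E. apply (f_equal (@proj1_sig _ _)) in E.
  rewrite !proj_clsE in E by auto.
  assert (hcls h h) by (apply hom_refl; apply Ph).
  rewrite <- E in H. exact H.
Qed.

Lemma clsE_rep e : clsE (repE e) = e.
Proof.
  destruct (repE_spec e) as [Hp Hc].
  unfold clsE. destruct (excluded_middle_informative (pf (repE e))); [|contradiction].
  destruct e as [c pc]. simpl in *. apply subset_eq_compat. symmetry; auto.
Qed.

Lemma rep_cls g : pf g -> path_homotopic (repE (clsE g)) g.
Proof.
  intros Pg. destruct (repE_spec (clsE g)) as [Hp Hc].
  rewrite proj_clsE in Hc by auto.
  assert (hcls (repE (clsE g)) (repE (clsE g))) by (apply hom_refl; apply Hp).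
  rewrite <- Hc in H. apply hom_sym. exact H.
Qed.

Definition pE (e : Ecar) : X := repE e 1.

Lemma pE_cls g : pf g -> pE (clsE g) = g 1.
Proof.
  intros Pg. unfold pE. destruct (hom_ends _ _ (rep_cls g Pg)) as [_ [_ [_ E]]]. auto.
Qed.

Lemma pf_concat g d : pf g -> is_path d -> g 1 = d 0 -> pf (concat g d).
Proof.
  intros [Pg Eg] Pd E. split. apply concat_path; auto. rewrite concat_0; auto.
Qed.

Lemma rep_start e : repE e 0 = x0.
Proof. apply rep_pf. Qed.

Definition openE (O : Ecar -> Prop) : Prop :=
  forall e, O e -> exists W : X -> Prop, is_open W /\ W (pE e) /\
    forall d, path_in W d -> d 0 = pE e -> O (clsE (concat (repE e) d)).

Lemma openE_full : openE (fun _ => True).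
Proof. intros e _. exists (fun _ => True). split; [apply open_full|]. split; auto. Qed.

Lemma openE_inter U V : openE U -> openE V -> openE (fun x => U x /\ V x).
Proof.
  intros HU HV e [Ue Ve].
  destruct (HU e Ue) as [W1 [o1 [w1 H1]]]. destruct (HV e Ve) as [W2 [o2 [w2 H2]]].
  exists (fun x => W1 x /\ W2 x). split; [apply open_inter; auto|]. split; [auto|].
  intros d Hd E. split; [apply H1|apply H2]; auto;
  apply (path_in_mono (fun x => W1 x /\ W2 x)); auto; intros x [? ?]; auto.
Qed.

Lemma openE_union (F : (Ecar -> Prop) -> Prop) :
  (forall U, F U -> openE U) -> openE (fun x => exists U, F U /\ U x).
Proof.
  intros HF e [U [FU Ue]]. destruct (HF U FU e Ue) as [W [o [w H]]].
  exists W; split; auto; split; auto. intros d Hd E. exists U; auto.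
Qed.

Definition ETop : Top := MkTop Ecar openE openE_full openE_inter openE_union.

Lemma pE_cont : @continuous ETop X pE.
Proof.
  intros V HV e Ve. exists V. split; auto. split; auto.
  intros d [Pd Vd] E. simpl. rewrite pE_cls. rewrite concat_1. apply Vd. apply I1.
  apply pf_concat; auto. apply rep_pf.
Qed.

Lemma cls_assoc a d d' : is_path d -> is_path d' -> d 0 = pE a -> d 1 = d' 0 ->
  clsE (concat (repE (clsE (concat (repE a) d))) d') = clsE (concat (repE a) (concat d d')).
Proof.
  intros Pd Pd' E1 E2.
  assert (Pad : pf (concat (repE a) d)) by (apply pf_concat; auto; apply rep_pf).
  assert (Ep : repE (clsE (concat (repE a) d)) 1 = d' 0).
  { change (pE (clsE (concat (repE a) d)) = d' 0). rewrite pE_cls; auto. rewrite concat_1; auto. }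
  apply clsE_eq.
  - apply pf_concat; auto. apply rep_pf.
  - apply pf_concat. apply rep_pf. apply concat_path; auto. rewrite concat_0; auto.
  - apply hom_trans with (concat (concat (repE a) d) d').
    + apply concat_cong; auto. apply rep_cls; auto. apply hom_refl; auto.
    + apply assoc; auto. apply rep_pf. 
Qed.

Definition Nb (a : Ecar) (W : X -> Prop) (e : Ecar) : Prop :=
  exists d, path_in W d /\ d 0 = pE a /\ e = clsE (concat (repE a) d).

Lemma Nb_pE a W e : Nb a W e -> W (pE e).
Proof.
  intros [d [[Pd Wd] [E1 E2]]]. subst e. rewrite pE_cls. rewrite concat_1. apply Wd, I1.
  apply pf_concat; auto. apply rep_pf.
Qed.

Lemma Nb_self a (W : X -> Prop) : W (pE a) -> Nb a W a.
Proof.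
  intros Wa. exists (const_path (pE a)). split; [apply path_in_const; auto|]. split; [reflexivity|].
  rewrite <- (clsE_rep a) at 1. apply clsE_eq. apply rep_pf.
  apply pf_concat. apply rep_pf. apply const_path_ok. reflexivity.
  apply hom_sym. apply runit. apply rep_pf.
Qed.

Lemma Nb_trans a W e f : Nb a W e -> Nb e W f -> Nb a W f.
Proof.
  intros [d1 [[P1 W1] [E1 E2]]] [d2 [[P2 W2] [E3 E4]]]. subst e f.
  assert (E5 : d1 1 = d2 0).
  { rewrite E3. rewrite pE_cls. rewrite concat_1; auto. apply pf_concat; auto. apply rep_pf. }
  exists (concat d1 d2). split; [apply path_in_concat; [split; auto|split; auto|auto]|]. split.
  rewrite concat_0; auto.
  apply cls_assoc; auto.
Qed.

Lemma Nb_inj a W e f : weakgood W -> Nb a W e -> Nb a W f -> pE e = pE f -> e = f.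
Proof.
  intros G [d1 [[P1 W1] [E1 E2]]] [d2 [[P2 W2] [E3 E4]]] Ep. subst e f.
  rewrite !pE_cls, !concat_1 in Ep by (apply pf_concat; auto; apply rep_pf).
  apply clsE_eq; try (apply pf_concat; auto; apply rep_pf).
  apply concat_cong. apply hom_refl, rep_pf. apply G; [split; auto|split; auto|congruence|auto]. unfold pE in *; congruence.
Qed.

Lemma Nb_shift a W e f : weakgood W -> Nb a W e -> Nb a W f -> Nb e W f.
Proof.
  intros G [d1 [[P1 W1] [E1 E2]]] [d2 [[P2 W2] [E3 E4]]]. subst e f.
  assert (E5 : pE (clsE (concat (repE a) d1)) = d1 1).
  { rewrite pE_cls. rewrite concat_1; auto. apply pf_concat; auto. apply rep_pf. }
  set (g := concat (rev_path d1) d2).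
  assert (Pg : is_path g).
  { apply concat_path; auto. apply rev_path_ok; auto. rewrite rev_1; congruence. }
  assert (Wg : path_in W g).
  { apply path_in_concat. apply path_in_rev; split; auto. split; auto. rewrite rev_1; congruence. }
  assert (g0 : g 0 = d1 1) by (unfold g; rewrite concat_0, rev_0; auto).
  assert (g1 : g 1 = d2 1) by (unfold g; rewrite concat_1; auto).
  assert (Pdg : is_path (concat d1 g)) by (apply concat_path; auto).
  exists g. split; auto. split. congruence.
  rewrite cls_assoc; auto.
  apply clsE_eq.
  - apply pf_concat; auto. apply rep_pf.
  - apply pf_concat; auto. apply rep_pf. rewrite concat_0. unfold pE in E1; congruence.
  - apply concat_cong. apply hom_refl, rep_pf.
    apply G; auto. split; auto. apply path_in_concat; auto. split; auto.
    rewrite concat_0. congruence. rewrite concat_1. auto.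
    unfold pE in E3; congruence.
Qed.

End Cover.

Definition good {X : Top} (W : X -> Prop) : Prop :=
  is_open W /\ path_connected_set W /\ weakgood W.

Lemma good_exists {X : Top} : locally_path_connected X -> semilocally_simply_connected X ->
  forall z : X, exists W, good W /\ W z.
Proof.
  intros Hl Hs z. destruct (Hs z) as [U [oU [Uz HU]]].
  destruct (Hl z U oU Uz) as [W [oW [Wz [WU pW]]]].
  exists W; split; auto. split; auto. split; auto.
  intros d d' [Pd Wd] [Pd' Wd'] E0 E1.
  destruct (pW z (d 0) Wz (Wd 0 I0)) as [al [[Pal [al0 al1]] [_ Wal]]].
  set (g := concat al d). set (h := concat al d').
  assert (Pg : is_path g) by (apply concat_path; auto).
  assert (Ph : is_path h) by (apply concat_path; auto; congruence).
  assert (Ig : path_in W g) by (apply path_in_concat; [split; auto|split; auto|auto]).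
  assert (Ih : path_in W h) by (apply path_in_concat; [split; auto|split; auto|congruence]).
  assert (Hgh : path_homotopic g h).
  { apply loop_trivial; auto. unfold g, h. rewrite !concat_1; auto.
    assert (g 0 = z) by (unfold g; rewrite concat_0; auto). rewrite H.
    apply HU.
    - split. apply concat_path; auto. apply rev_path_ok; auto. rewrite rev_0. unfold g, h; rewrite !concat_1; auto.
      split. rewrite concat_0; auto. rewrite concat_1, rev_1. unfold h; rewrite concat_0; auto.
    - apply (path_in_mono W); auto. apply path_in_concat; auto. apply path_in_rev; auto.
      rewrite rev_0. unfold g, h; rewrite !concat_1; auto. }
  apply (cancel_l al); auto. congruence.
Qed.

Lemma is_open_ext {X : Top} (U V : X -> Prop) : is_open U -> (forall x, U x <-> V x) -> is_open V.
Proof.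
  intros HU E. assert (U = V).
  { apply functional_extensionality; intro x. apply propositional_extensionality; auto. }
  subst; auto.
Qed.

Lemma open_of_local {X : Top} (A : X -> Prop) :
  (forall x, A x -> exists W, is_open W /\ W x /\ forall y, W y -> A y) -> is_open A.
Proof.
  intros H. apply (is_open_ext (fun x => exists U, (is_open U /\ forall y, U y -> A y) /\ U x)).
  - apply open_union. intros U [? ?]; auto.
  - intros x; split.
    + intros [U [[_ HU] Ux]]; auto.
    + intros Ax. destruct (H x Ax) as [W [oW [Wx HW]]]. exists W; auto.
Qed.

Lemma X_path_from {X : Top} (x0 : X) : connected X -> locally_path_connected X ->
  forall z, exists g, path_from_to g x0 z.
Proof.
  intros [_ Hc] Hl.
  set (A := fun z : X => exists g, path_from_to g x0 z).
  assert (Hopen : forall z, exists W, is_open W /\ W z /\ forall y, W y -> (A y <-> A z)).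
  { intros z. destruct (Hl z (fun _ => True) (open_full X) I) as [W [oW [Wz [_ pW]]]].
    exists W; split; auto; split; auto. intros y Wy.
    destruct (pW z y Wz Wy) as [e [[Pe [e0 e1]] [_ We]]].
    unfold A; split; intros [g [Pg [g0 g1]]].
    - exists (concat g (rev_path e)). split. apply concat_path; auto. apply rev_path_ok; auto.
      rewrite rev_0; congruence. rewrite concat_0, concat_1, rev_1; auto.
    - exists (concat g e). split. apply concat_path; auto. congruence.
      rewrite concat_0, concat_1; auto. }
  intros z. apply NNPP. intro Hz.
  apply (Hc A (fun y => ~ A y)).
  - apply open_of_local. intros x Ax. destruct (Hopen x) as [W [oW [Wx HW]]].
    exists W; split; auto; split; auto. intros y Wy. apply (proj2 (HW y Wy)); auto.
  - apply open_of_local. intros x Ax. destruct (Hopen x) as [W [oW [Wx HW]]].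
    exists W; split; auto; split; auto. intros y Wy Ay. apply Ax, (proj1 (HW y Wy)); auto.
  - intros x. apply classic.
  - intros x [H1 H2]; auto.
  - exists x0. exists (const_path x0). split. apply const_path_ok. split; reflexivity.
  - exists z. auto.
Qed.

Section Sections.
Context {X : Top} (x0 : X).

Lemma section_cont (Hl : locally_path_connected X) (V : X -> Prop) (s : X -> Ecar x0) :
  weakgood V -> is_open V ->
  (forall z, V z -> pE x0 (s z) = z) ->
  (forall z z' eta, V z -> path_in V eta -> eta 0 = z -> eta 1 = z' ->
     exists a, Nb x0 a V (s z) /\ Nb x0 a V (s z')) ->
  @continuous_on X (ETop x0) V s.
Proof.
  intros G oV Hp Hn z Vz O oO Oz.
  destruct (oO (s z) Oz) as [W1 [o1 [w1 H1]]].
  rewrite Hp in w1 by auto.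
  destruct (Hl z (fun x => V x /\ W1 x) (open_inter X _ _ oV o1) (conj Vz w1)) as [W2 [o2 [w2 [W2s pW2]]]].
  exists W2; split; auto; split; auto.
  intros z' W2z' Vz'.
  destruct (pW2 z z' w2 W2z') as [eta [[Pe [e0 e1]] Ie]].
  assert (Ve : path_in V eta) by (apply (path_in_mono W2); auto; intros x Hx; apply W2s; auto).
  assert (We : path_in W1 eta) by (apply (path_in_mono W2); auto; intros x Hx; apply W2s; auto).
  specialize (H1 eta We). rewrite Hp in H1 by auto. specialize (H1 e0).
  destruct (Hn z z' eta Vz Ve e0 e1) as [a [Na Na']].
  set (f := clsE x0 (concat (repE x0 (s z)) eta)) in *.
  assert (Nf : Nb x0 (s z) V f).
  { exists eta. split; auto. split; auto. rewrite Hp; auto. }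
  assert (f = s z').
  { apply (Nb_inj x0 a V); auto. apply (Nb_trans x0 a V (s z)); auto.
    rewrite Hp by auto. unfold f. rewrite pE_cls. rewrite concat_1; auto.
    apply pf_concat; auto. apply rep_pf. unfold pE in Hp. rewrite Hp; auto. }
  rewrite <- H. auto.
Qed.

End Sections.

Section Cov.
Context {X : Top} (x0 : X).

Lemma Nb_open a (W : X -> Prop) : is_open W -> openE x0 (Nb x0 a W).
Proof.
  intros oW e Ne. exists W; split; auto. split. eapply Nb_pE; eauto.
  intros d Hd E. apply (Nb_trans x0 a W e); auto. exists d; auto.
Qed.

Definition secN (a : Ecar x0) (W : X -> Prop) (z : X) : Ecar x0 :=
  clsE x0 (concat (repE x0 a)
    (epsilon (inhabits (const_path x0)) (fun d => path_in W d /\ d 0 = pE x0 a /\ d 1 = z))).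

Lemma secN_Nb a W z : path_connected_set W -> W (pE x0 a) -> W z -> Nb x0 a W (secN a W z) /\ pE x0 (secN a W z) = z.
Proof.
  intros pW Wa Wz.
  destruct (epsilon_spec (inhabits (const_path x0)) (fun d => path_in W d /\ d 0 = pE x0 a /\ d 1 = z))
    as [[Pd Wd] [E0 E1]].
  { destruct (pW _ _ Wa Wz) as [g [[Pg [g0 g1]] Ig]]. exists g; auto. }
  split.
  - eexists. split; [split; eauto|]. split; eauto.
  - unfold secN. rewrite pE_cls. rewrite concat_1. auto.
    apply pf_concat; auto. apply rep_pf.
Qed.

Lemma evenly (Hl : locally_path_connected X) (W : X -> Prop) : good W ->
  @evenly_covered (ETop x0) X (pE x0) W.
Proof.
  intros [oW [pW G]].
  exists (fun S => exists a, W (pE x0 a) /\ S = Nb x0 a W).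
  split; [|split; [|split]].
  - intros S [a [Wa ES]]. subst S. apply Nb_open; auto.
  - intros S S' [a [Wa ES]] [b [Wb ES']]. subst S S'.
    destruct (classic (exists e, Nb x0 a W e /\ Nb x0 b W e)) as [[e [Ne Ne']]|Hn].
    + left. intros f; split; intros Nf.
      * apply (Nb_trans x0 b W e); auto. apply (Nb_shift x0 a W e f); auto.
      * apply (Nb_trans x0 a W e); auto. apply (Nb_shift x0 b W e f); auto.
    + right. intros f [H1 H2]. apply Hn. exists f; auto.
  - intros e; split.
    + intros We. exists (Nb x0 e W). split. exists e; auto. apply Nb_self; auto.
    + intros [S [[a [Wa ES]] Se]]. subst S. eapply Nb_pE; eauto.
  - intros S [a [Wa ES]]. subst S. exists (secN a W).
    split; [|split].
    + apply section_cont; auto.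
      * intros z Wz. apply secN_Nb; auto.
      * intros z z' eta Wz Ie e0 e1. exists a. split; apply secN_Nb; auto.
        subst z'. apply Ie, I1.
    + intros z Wz. apply secN_Nb; auto.
    + intros e Ne. assert (We := Nb_pE _ _ _ _ Ne).
      destruct (secN_Nb a W (pE x0 e) pW Wa We) as [N1 N2]. apply (Nb_inj x0 a W); auto.
Qed.

Lemma covering_ok (Hc : connected X) (Hl : locally_path_connected X) (Hs : semilocally_simply_connected X) :
  @covering_map (ETop x0) X (pE x0).
Proof.
  split; [apply pE_cont|split].
  - intros z. destruct (X_path_from x0 Hc Hl z) as [g [Pg [g0 g1]]].
    exists (clsE x0 g). rewrite pE_cls; auto. split; auto.
  - intros z. destruct (good_exists Hl Hs z) as [W [GW Wz]].
    exists W. split. apply GW. split; auto. apply evenly; auto.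
Qed.

Lemma section_weakgood (Hc : connected X) (Hl : locally_path_connected X) (V : X -> Prop) :
  is_open V -> weakgood V ->
  exists s : X -> Ecar x0, @continuous_on X (ETop x0) V s /\ forall z, V z -> pE x0 (s z) = z.
Proof.
  intros oV G.
  set (P := fun z b => exists eta, path_in V eta /\ eta 0 = b /\ eta 1 = z).
  set (B := fun z => epsilon (inhabits x0) (P z)).
  set (rho := fun b => epsilon (inhabits (const_path x0)) (fun g => path_from_to g x0 b)).
  set (dl := fun z => epsilon (inhabits (const_path x0)) (fun eta => path_in V eta /\ eta 0 = B z /\ eta 1 = z)).
  set (s := fun z => clsE x0 (concat (rho (B z)) (dl z))).
  assert (HB : forall z, V z -> P z (B z)).
  { intros z Vz. apply epsilon_spec. exists z. exists (const_path z). split. apply path_in_const; auto.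
    split; reflexivity. }
  assert (Hrho : forall b, path_from_to (rho b) x0 b).
  { intros b. apply epsilon_spec. apply X_path_from; auto. }
  assert (Hdl : forall z, V z -> path_in V (dl z) /\ dl z 0 = B z /\ dl z 1 = z).
  { intros z Vz. apply epsilon_spec. apply HB; auto. }
  assert (Prho : forall b, pf x0 (rho b)).
  { intros b. destruct (Hrho b) as [? [? ?]]. split; auto. }
  assert (HN : forall z, V z -> Nb x0 (clsE x0 (rho (B z))) V (s z)).
  { intros z Vz. destruct (Hdl z Vz) as [[Pd Vd] [d0 d1]].
    assert (E1 : rho (B z) 1 = B z) by apply Hrho.
    exists (dl z). split; [split; auto|]. split.
    rewrite pE_cls; auto. congruence.
    unfold s. apply clsE_eq.
    - apply pf_concat; auto. congruence.
    - apply pf_concat; auto. apply rep_pf. change (pE x0 (clsE x0 (rho (B z))) = dl z 0).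
      rewrite pE_cls; auto. congruence.
    - apply concat_cong. apply hom_sym, rep_cls; auto. apply hom_refl; auto. congruence. }
  exists s. split.
  - apply section_cont; auto.
    + intros z Vz. destruct (Hdl z Vz) as [[Pd Vd] [d0 d1]]. unfold s. rewrite pE_cls.
      rewrite concat_1; auto. apply pf_concat; auto. destruct (Hrho (B z)) as [? [? ?]]. congruence.
    + intros z z' eta Vz [Pe Ve] e0 e1.
      assert (Vz' : V z') by (subst z'; apply Ve, I1).
      assert (EB : B z' = B z).
      { unfold B. f_equal. apply functional_extensionality; intro b. apply propositional_extensionality.
        unfold P. split; intros [g [[Pg Vg] [g0 g1]]].
        - exists (concat g (rev_path eta)). split. apply path_in_concat; [split; auto|apply path_in_rev; split; auto|].
          rewrite rev_0; congruence. rewrite concat_0, concat_1, rev_1; auto.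
        - exists (concat g eta). split. apply path_in_concat; [split; auto|split; auto|congruence].
          rewrite concat_0, concat_1; auto. }
      exists (clsE x0 (rho (B z))). split. apply HN; auto. rewrite <- EB. apply HN; auto.
  - intros z Vz. destruct (Hdl z Vz) as [[Pd Vd] [d0 d1]]. unfold s. rewrite pE_cls.
    rewrite concat_1; auto. apply pf_concat; auto. destruct (Hrho (B z)) as [? [? ?]]. congruence.
Qed.

End Cov.

Lemma interval_conn (A : R -> Prop) : A 0 ->
  (forall t, I01 t -> exists d, 0 < d /\ forall t', I01 t' -> Rabs (t' - t) < d -> (A t' <-> A t)) ->
  forall t, I01 t -> A t.
Proof.
  intros A0 HL.
  set (S := fun t => 0 <= t <= 1 /\ forall u, 0 <= u <= t -> A u).
  assert (bS : bound S) by (exists 1; intros t [Ht _]; lra).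
  assert (S0 : S 0).
  { split; [lra|]. intros u Hu. replace u with 0 by lra. auto. }
  destruct (completeness S bS (ex_intro _ 0 S0)) as [m [ubm lubm]].
  assert (m0 : 0 <= m) by (apply ubm; auto).
  assert (m1 : m <= 1) by (apply lubm; intros t [Ht _]; lra).
  destruct (HL m (conj m0 m1)) as [d [dp Hd]].
  assert (Ex : exists t1, S t1 /\ m - d < t1).
  { apply NNPP; intro Hn. assert (m <= m - d); [|lra].
    apply lubm. intros t St. apply Rnot_lt_le. intro Hlt. apply Hn. exists t; auto. }
  destruct Ex as [t1 [[It1 St1] Ht1]].
  assert (t1m : t1 <= m) by (apply ubm; split; auto).
  assert (Am : A m).
  { apply (Hd t1). unfold I01; lra. apply Rabs_def1; lra. apply St1; lra. }
  assert (Hall : forall u, I01 u -> u < m + d -> A u).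
  { intros u Iu Hu. destruct (Rle_dec u t1). apply St1; unfold I01 in Iu; lra.
    apply (Hd u Iu). apply Rabs_def1; lra. auto. }
  assert (m = 1).
  { destruct (Req_dec m 1) as [|Hne]; auto. exfalso.
    set (t2 := Rmin 1 (m + d/2)).
    assert (t2 <= 1) by apply Rmin_l. assert (t2 <= m + d/2) by apply Rmin_r.
    assert (m < t2).
    { unfold t2. unfold Rmin. destruct (Rle_dec 1 (m + d/2)); lra. }
    assert (S t2).
    { split. lra. intros u Hu. apply Hall. unfold I01; lra. lra. }
    assert (t2 <= m) by (apply ubm; auto). lra. }
  intros t It. apply Hall; auto. unfold I01 in It; lra.
Qed.

Lemma seg_close a b u d : I01 u -> Rabs (b - a) < d -> Rabs (seg a b u - a) < d.
Proof.
  intros Iu H. unfold seg. replace (a + u * (b - a) - a) with (u * (b - a)) by ring.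
  rewrite Rabs_mult. unfold I01 in Iu. rewrite (Rabs_right u) by lra.
  assert (0 <= Rabs (b - a)) by apply Rabs_pos. nra.
Qed.

Lemma seg_0 a b : seg a b 0 = a. Proof. unfold seg; ring. Qed.
Lemma seg_1 a b : seg a b 1 = b. Proof. unfold seg; ring. Qed.

Section SC.
Context {X : Top} (x0 : X).

Definition Kr (K : R -> R -> X) (s t : R) : R -> X := fun u => K s (seg 0 t u).

Lemma Kr_path K s t : cont2 K -> I01 s -> I01 t -> is_path (Kr K s t).
Proof.
  intros HK Is It. apply (G1_path K (fun _ => s) (seg 0 t)); auto.
  apply rp_const; auto. apply rp_seg; auto. apply I0.
Qed.

Lemma Kr_0 K s t : Kr K s t 0 = K s 0.
Proof. unfold Kr. rewrite seg_0. reflexivity. Qed.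
Lemma Kr_1 K s t : Kr K s t 1 = K s t.
Proof. unfold Kr. rewrite seg_1. reflexivity. Qed.

Lemma square K s t s' t' (x : X) : cont2 K -> (forall s, I01 s -> K s 0 = x) ->
  I01 s -> I01 t -> I01 s' -> I01 t' ->
  path_homotopic (Kr K s' t') (concat (Kr K s t) (fun u => K (seg s s' u) (seg t t' u))).
Proof.
  intros HK Kx Is It Is' It'.
  assert (P' : is_path (Kr K s' t')) by (apply Kr_path; auto).
  apply hom_trans with (concat (const_path x) (Kr K s' t')).
  { replace x with (Kr K s' t' 0) at 1. apply hom_sym, lunit; auto. rewrite Kr_0; auto. }
  pose proof (G1 K (@concat RTop (seg s s') (fun _ => s')) (@concat RTop (fun _ => 0) (seg 0 t'))
                   (@concat RTop (fun _ => s) (seg s s')) (@concat RTop (seg 0 t) (seg t t')) HK) as HG.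
  assert (I_0 := I0). assert (I_1 := I1).
  apply hom_ext_l with (fun u => K (@concat RTop (seg s s') (fun _ => s') u) (@concat RTop (fun _ => 0) (seg 0 t') u)).
  apply hom_ext_r with (fun u => K (@concat RTop (fun _ => s) (seg s s') u) (@concat RTop (seg 0 t) (seg t t') u)).
  - apply HG.
    + apply rp_concat; [apply rp_seg; auto|apply rp_const; auto|]. rewrite seg_1; auto.
    + apply rp_concat; [apply rp_const; auto|apply rp_seg; auto|]. rewrite seg_0; auto.
    + apply rp_concat; [apply rp_const; auto|apply rp_seg; auto|]. rewrite seg_0; auto.
    + apply rp_concat; [apply rp_seg; auto|apply rp_seg; auto|]. rewrite seg_0, seg_1; auto.
    + rewrite !(concat_0 (X:=RTop)). rewrite seg_0; auto.
    + rewrite !(concat_0 (X:=RTop)). rewrite seg_0; auto.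
    + rewrite !(concat_1 (X:=RTop)). rewrite seg_1; auto.
    + rewrite !(concat_1 (X:=RTop)). rewrite !seg_1; auto.
  - intros u Iu. unfold concat. destruct (Rle_dec u (1/2)); reflexivity.
  - intros u Iu. unfold concat, const_path, Kr. destruct (Rle_dec u (1/2)).
    + apply Kx. apply (rp_seg s s' Is Is'). apply I01_2s; auto.
    + reflexivity.
Qed.

Lemma contE (rho : R -> X) (K : R -> R -> X) (x : X) : pf x0 rho -> rho 1 = x -> cont2 K ->
  (forall s, I01 s -> K s 0 = x) ->
  @cont2 (ETop x0) (fun s t => clsE x0 (concat rho (Kr K s t))).
Proof.
  intros Prho E1 HK Kx s t Is It O oO Oz.
  destruct (oO _ Oz) as [W [oW [Wz HW]]].
  assert (Pst : forall s t, I01 s -> I01 t -> pf x0 (concat rho (Kr K s t))).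
  { intros a b Ia Ib. apply pf_concat; auto. apply Kr_path; auto. rewrite Kr_0, Kx; auto. }
  assert (EpE : pE x0 (clsE x0 (concat rho (Kr K s t))) = K s t).
  { rewrite pE_cls; auto. rewrite concat_1, Kr_1; auto. }
  rewrite EpE in Wz, HW.
  destruct (HK s t Is It W oW Wz) as [d [dp Hd]].
  exists d; split; auto. intros s' t' Is' It' Hs Ht.
  set (delta := fun u => K (seg s s' u) (seg t t' u)).
  assert (Pdelta : is_path delta).
  { apply (G1_path K (seg s s') (seg t t')); auto; apply rp_seg; auto. }
  assert (Wdelta : path_in W delta).
  { split; auto. intros u Iu. apply Hd. apply (rp_seg s s'); auto. apply (rp_seg t t'); auto.
    apply seg_close; auto. apply seg_close; auto. }
  assert (d0 : delta 0 = K s t) by (unfold delta; rewrite !seg_0; auto).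
  specialize (HW delta Wdelta d0).
  set (e := clsE x0 (concat rho (Kr K s t))) in *.
  assert (Ee : clsE x0 (concat rho (Kr K s' t')) = clsE x0 (concat (repE x0 e) delta)).
  { apply clsE_eq; auto.
    - apply pf_concat; auto. apply rep_pf. change (pE x0 e = delta 0). rewrite EpE; auto.
    - apply hom_trans with (concat rho (concat (Kr K s t) delta)).
      { apply concat_cong. apply hom_refl; apply Prho. apply (square K s t s' t' x); auto.
        rewrite Kr_0, Kx; auto. }
      apply hom_trans with (concat (concat rho (Kr K s t)) delta).
      { apply hom_sym, assoc; auto. apply Prho. apply Kr_path; auto. rewrite Kr_0, Kx; auto.
        rewrite Kr_1; auto. }
      apply concat_cong. apply hom_sym, rep_cls; auto. apply hom_refl; auto.
      rewrite concat_1, Kr_1; auto. }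
  rewrite Ee. exact HW.
Qed.

End SC.

Section SC2.
Context {X : Top} (x0 : X).

Lemma cls_cong e g g' : path_homotopic g g' -> g 0 = pE x0 e ->
  clsE x0 (concat (repE x0 e) g) = clsE x0 (concat (repE x0 e) g').
Proof.
  intros Hg E. destruct (hom_ends _ _ Hg) as [Pg [Pg' [E0 _]]].
  apply clsE_eq.
  - apply pf_concat; auto. apply rep_pf.
  - apply pf_concat; auto. apply rep_pf. rewrite E0. auto.
  - apply concat_cong; auto. apply hom_refl, rep_pf.
Qed.

Lemma cls_rep_const e : clsE x0 (concat (repE x0 e) (const_path (pE x0 e))) = e.
Proof.
  transitivity (clsE x0 (repE x0 e)); [|apply clsE_rep]. apply clsE_eq.
  apply pf_concat. apply rep_pf. apply const_path_ok. reflexivity. apply rep_pf.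
  apply runit. apply rep_pf.
Qed.

Lemma E_path_connected (Hc : connected X) (Hl : locally_path_connected X) :
  path_connected (ETop x0).
Proof.
  split. constructor. exact (e0 x0).
  set (estar := clsE x0 (concat (const_path x0) (const_path x0))).
  assert (Lift : forall a : Ecar x0, exists L, @path_from_to (ETop x0) L estar a).
  { intros a. destruct (rep_pf x0 a) as [Pa a0].
    set (K := fun (_ : R) t => repE x0 a t).
    assert (HK : cont2 K) by (apply path_cont2; auto).
    pose proof (contE x0 (const_path x0) K x0 (pf_const x0) eq_refl HK (fun s _ => a0)) as HC.
    exists (fun t => clsE x0 (concat (const_path x0) (Kr K 0 t))).
    split. apply (cont2_path_t _ 0 HC I0). split.
    - unfold estar. f_equal. f_equal. apply functional_extensionality; intro u.
      unfold Kr, K, seg, const_path. rewrite <- a0. f_equal. ring.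
    - assert (Kr K 0 1 = repE x0 a).
      { apply functional_extensionality; intro u. unfold Kr, K, seg. f_equal. ring. }
      rewrite H. transitivity (clsE x0 (repE x0 a)); [|apply clsE_rep]. apply clsE_eq.
      apply pf_concat; auto. apply pf_const. apply rep_pf.
      replace (const_path x0) with (const_path (repE x0 a 0)) by (rewrite a0; reflexivity).
      apply lunit. auto. }
  intros a b _ _. destruct (Lift a) as [La [PLa [La0 La1]]]. destruct (Lift b) as [Lb [PLb [Lb0 Lb1]]].
  exists (concat (rev_path La) Lb). split. split.
  apply concat_path. apply rev_path_ok; auto. auto. rewrite rev_1. congruence.
  split. rewrite concat_0, rev_0; auto. rewrite concat_1; auto.
  split. apply concat_path. apply rev_path_ok; auto. auto. rewrite rev_1. congruence. auto.
Qed.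

End SC2.

Section SC3.
Context {X : Top} (x0 : X).

Lemma loop_shrink (K : R -> R -> X) (x : X) s : cont2 K -> I01 s ->
  (forall s, I01 s -> K s 0 = x) -> (forall s, I01 s -> K s 1 = x) -> (forall t, I01 t -> K 1 t = x) ->
  path_homotopic (Kr K s 1) (const_path x).
Proof.
  intros HK Is K0 K1 K1t.
  assert (I_0 := I0). assert (I_1 := I1).
  set (b1 := @concat RTop (@concat RTop (seg s 1) (fun _ => 1)) (seg 1 s)).
  set (b2 := @concat RTop (@concat RTop (fun _ => 0) (seg 0 1)) (fun _ => 1)).
  pose proof (G1 K (fun _ => s) (fun u => u) b1 b2 HK) as HG.
  apply hom_ext_l with (fun u => K s u).
  apply hom_ext_r with (fun u => K (b1 u) (b2 u)).
  - apply HG.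
    + apply rp_const; auto.
    + apply rp_id.
    + unfold b1. apply rp_concat. apply rp_concat. apply rp_seg; auto. apply rp_const; auto.
      rewrite seg_1; auto. apply rp_seg; auto. rewrite (concat_1 (X:=RTop)), seg_0. auto.
    + unfold b2. apply rp_concat. apply rp_concat. apply rp_const; auto. apply rp_seg; auto.
      rewrite seg_0; auto. apply rp_const; auto. rewrite (concat_1 (X:=RTop)), seg_1. auto.
    + unfold b1. rewrite !(concat_0 (X:=RTop)), seg_0. auto.
    + unfold b2. rewrite !(concat_0 (X:=RTop)). auto.
    + unfold b1. rewrite !(concat_1 (X:=RTop)), seg_1. auto.
    + unfold b2. rewrite !(concat_1 (X:=RTop)). auto.
  - intros u Iu. unfold b1, b2, concat, const_path.
    destruct (Rle_dec u (1/2)).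
    + assert (I2 := I01_2s u Iu r). destruct (Rle_dec (2 * u) (1/2)).
      * apply K0. apply (rp_seg s 1); auto. apply I01_2s; auto.
      * apply K1t. apply (rp_seg 0 1); auto. apply I01_2s1; auto.
    + apply K1. apply (rp_seg 1 s); auto. apply I01_2s1; auto.
  - intros u Iu. unfold Kr, seg. f_equal. ring.
Qed.

Lemma E_loops (Hl : locally_path_connected X) (Hs : semilocally_simply_connected X) :
  forall (e : Ecar x0) (lam : R -> Ecar x0), @is_loop_at (ETop x0) lam e ->
    @path_homotopic (ETop x0) lam (@const_path (ETop x0) e).
Proof.
  intros e lam [Plam [l0 l1]].
  assert (I_0 := I0). assert (I_1 := I1).
  set (sig := fun t => pE x0 (lam t)).
  assert (Psig : is_path sig) by exact (@comp_path (ETop x0) X (pE x0) lam (pE_cont x0) Plam).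
  assert (sig0 : sig 0 = pE x0 e) by (unfold sig; rewrite l0; auto).
  assert (sig1 : sig 1 = pE x0 e) by (unfold sig; rewrite l1; auto).
  set (K0 := fun (_ : R) t => sig t).
  assert (HK0 : cont2 K0) by (apply path_cont2; auto).
  pose proof (contE x0 (repE x0 e) K0 (pE x0 e) (rep_pf x0 e) eq_refl HK0 (fun s _ => sig0)) as HC0.
  set (L := fun t => clsE x0 (concat (repE x0 e) (Kr K0 0 t))).
  assert (PL : @is_path (ETop x0) L) by exact (cont2_path_t _ 0 HC0 I0).
  assert (pEL : forall t, I01 t -> pE x0 (L t) = sig t).
  { intros t It. unfold L. rewrite pE_cls. rewrite concat_1, Kr_1. auto.
    apply pf_concat. apply rep_pf. apply Kr_path; auto. rewrite Kr_0. unfold K0. rewrite sig0. auto. }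
  assert (L0 : L 0 = e).
  { unfold L. replace (Kr K0 0 0) with (const_path (pE x0 e)). apply cls_rep_const.
    apply functional_extensionality; intro u. unfold Kr, K0, const_path. rewrite <- sig0.
    f_equal. unfold seg; ring. }
  assert (Uniq : forall t, I01 t -> lam t = L t).
  { apply interval_conn. rewrite L0; auto.
    intros t It. destruct (good_exists Hl Hs (sig t)) as [W [[oW [pW G]] Wt]].
    assert (N1 : Nb x0 (lam t) W (lam t)) by (apply Nb_self; auto).
    assert (N2 : Nb x0 (L t) W (L t)) by (apply Nb_self; rewrite pEL; auto).
    destruct (Plam t It _ (Nb_open x0 (lam t) W oW) N1) as [d1 [d1p H1]].
    destruct (PL t It _ (Nb_open x0 (L t) W oW) N2) as [d2 [d2p H2]].
    exists (Rmin d1 d2). split. apply Rmin_pos; auto.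
    intros t' It' Ht.
    assert (Nl : Nb x0 (lam t) W (lam t')) by (apply H1; auto; eapply Rlt_le_trans; eauto; apply Rmin_l).
    assert (NL : Nb x0 (L t) W (L t')) by (apply H2; auto; eapply Rlt_le_trans; eauto; apply Rmin_r).
    assert (Ep : pE x0 (lam t') = pE x0 (L t')) by (rewrite pEL; auto).
    assert (Ep0 : pE x0 (lam t) = pE x0 (L t)) by (rewrite pEL; auto).
    split; intro HE.
    - rewrite <- HE in NL.
      assert (N3 : Nb x0 (lam t') W (L t)) by (apply (Nb_shift x0 (L t)); auto).
      assert (N4 : Nb x0 (lam t) W (L t)) by (apply (Nb_trans x0 (lam t) W (lam t')); auto).
      apply (Nb_inj x0 (lam t) W); auto.
    - rewrite <- HE in NL. apply (Nb_inj x0 (lam t) W); auto. }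
  assert (Hsig : path_homotopic sig (const_path (pE x0 e))).
  { assert (E1 : Kr K0 0 1 = sig).
    { apply functional_extensionality; intro u. unfold Kr, K0, seg. f_equal. ring. }
    assert (Ee : clsE x0 (repE x0 e) = clsE x0 (concat (repE x0 e) sig)).
    { rewrite clsE_rep. rewrite <- E1. fold (L 1). rewrite <- Uniq; auto. }
    apply clsE_inj in Ee; [|apply rep_pf|apply pf_concat; auto; apply rep_pf].
    apply (cancel_l (repE x0 e)); auto. apply rep_pf. apply const_path_ok.
    apply hom_trans with (repE x0 e). apply hom_sym; auto.
    apply hom_sym, runit. apply rep_pf. }
  destruct Hsig as [K [HK [Ks0 [Ks1 Kb]]]].
  assert (Kx : forall s, I01 s -> K s 0 = pE x0 e) by (intros s Is; rewrite (proj1 (Kb s Is)); auto).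
  assert (Kx1 : forall s, I01 s -> K s 1 = pE x0 e) by (intros s Is; rewrite (proj2 (Kb s Is)); auto).
  pose proof (contE x0 (repE x0 e) K (pE x0 e) (rep_pf x0 e) eq_refl HK Kx) as HC.
  exists (fun s t => clsE x0 (concat (repE x0 e) (Kr K s t))).
  split; [exact HC|split; [|split]].
  - intros t It. rewrite Uniq by auto. unfold L. apply cls_cong.
    + apply hom_ext_r with (Kr K 0 t). apply hom_refl, Kr_path; auto.
      intros u Iu. unfold Kr. rewrite Ks0; auto. apply (rp_seg 0 t); auto.
    + rewrite Kr_0, Kx; auto.
  - intros t It. unfold const_path. transitivity (clsE x0 (concat (repE x0 e) (const_path (pE x0 e)))); [|apply cls_rep_const]. apply cls_cong.
    + apply hom_ext_r with (Kr K 1 t). apply hom_refl, Kr_path; auto.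
      intros u Iu. unfold Kr. rewrite Ks1; auto. apply (rp_seg 0 t); auto.
    + rewrite Kr_0, Kx; auto.
  - intros s Is. split.
    + rewrite l0. transitivity (clsE x0 (concat (repE x0 e) (const_path (pE x0 e)))); [|apply cls_rep_const]. apply cls_cong.
      * apply hom_ext_r with (Kr K s 0). apply hom_refl, Kr_path; auto.
        intros u Iu. unfold Kr, const_path. rewrite <- (Kx s Is). f_equal. unfold seg; ring.
      * rewrite Kr_0, Kx; auto.
    + rewrite l1. transitivity (clsE x0 (concat (repE x0 e) (const_path (pE x0 e)))); [|apply cls_rep_const]. apply cls_cong.
      * apply loop_shrink; auto.
      * rewrite Kr_0, Kx; auto.
Qed.

End SC3.

Lemma fst_cont {X Y : Top} : @continuous (prodTop X Y) X fst.
Proof.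
  intros V HV p Vp. exists V, (fun _ => True). split; auto. split. apply open_full.
  split; auto.
Qed.

Lemma snd_cont {X Y : Top} : @continuous (prodTop X Y) Y snd.
Proof.
  intros V HV p Vp. exists (fun _ => True), V. split. apply open_full. split; auto.
Qed.

Lemma pair_path {X Y : Top} (f : R -> X) (g : R -> Y) : is_path f -> is_path g ->
  @is_path (prodTop X Y) (fun t => (f t, g t)).
Proof.
  intros Hf Hg t It V HV Vt. destruct (HV _ Vt) as [A [B [oA [oB [Af [Bg HAB]]]]]].
  simpl in Af, Bg.
  destruct (Hf t It A oA Af) as [d1 [d1p H1]]. destruct (Hg t It B oB Bg) as [d2 [d2p H2]].
  exists (Rmin d1 d2). split. apply Rmin_pos; auto.
  intros t' It' Ht. apply HAB; simpl.
  apply H1; auto. eapply Rlt_le_trans; eauto; apply Rmin_l.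
  apply H2; auto. eapply Rlt_le_trans; eauto; apply Rmin_r.
Qed.

Lemma comp_on_path {X Y : Top} (U : X -> Prop) (s : X -> Y) (l : R -> X) :
  continuous_on U s -> path_in U l -> is_path (fun t => s (l t)).
Proof.
  intros Hs [Pl Ul] t It V HV Vt.
  destruct (Hs (l t) (Ul t It) V HV Vt) as [W [oW [Wt HW]]].
  destruct (Pl t It W oW Wt) as [d [dp Hd]].
  exists d; split; auto.
Qed.

Lemma hom_map {X Y : Top} (f : X -> Y) (g h : R -> X) : continuous f -> path_homotopic g h ->
  path_homotopic (fun t => f (g t)) (fun t => f (h t)).
Proof.
  intros Hf [H [HC [H0 [H1 Hb]]]].
  exists (fun s t => f (H s t)). split; [|split; [|split]].
  - intros s t Is It V HV Vt. destruct (HC s t Is It _ (Hf V HV) Vt) as [d [dp Hd]].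
    exists d; split; auto.
  - intros t It. rewrite H0; auto.
  - intros t It. rewrite H1; auto.
  - intros s Is. destruct (Hb s Is) as [E0 E1]. rewrite E0, E1. auto.
Qed.

Lemma part1 (X : Top) : connected X -> locally_path_connected X -> semilocally_simply_connected X ->
  forall n : nat, TCD_le X n -> cat1_le X n.
Proof.
  intros Hc Hl Hs n [U [oU [cU dU]]].
  destruct Hc as [[x0] Hc']. assert (Hc : connected X) by (split; [constructor; auto|auto]).
  exists (ETop x0), (pE x0). split.
  { split. apply covering_ok; auto. split. apply E_path_connected; auto. apply E_loops; auto. }
  exists (fun i x => U i (x, x0)). split; [|split].
  - intros i Hi. apply open_of_local. intros x Ux.
    destruct (oU i Hi (x, x0) Ux) as [A [B [oA [oB [Ax [Bx HAB]]]]]].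
    exists A. split; [auto|split; [auto|]]. intros y Ay. apply (HAB (y, x0)); auto.
  - intros z. destruct (cU (z, x0)) as [i [Hi Ui]]. exists i; auto.
  - intros i Hi. apply section_weakgood; auto.
    + apply open_of_local. intros x Ux.
      destruct (oU i Hi (x, x0) Ux) as [A [B [oA [oB [Ax [Bx HAB]]]]]].
      exists A. split; [auto|split; [auto|]]. intros y Ay. apply (HAB (y, x0)); auto.
    + intros d d' [Pd Ud] [Pd' Ud'] E0 E1.
      apply loop_trivial; auto.
      set (ell := concat d (rev_path d')).
      assert (Pell : is_path ell).
      { apply concat_path; auto. apply rev_path_ok; auto. rewrite rev_0; auto. }
      assert (Uell : forall t, I01 t -> U i (ell t, x0)).
      { intros t It. unfold ell, concat. destruct (Rle_dec t (1/2)).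
        apply Ud, I01_2s; auto. unfold rev_path. apply Ud'. apply I01_2s1 in n0; auto.
        unfold I01 in *; lra. }
      assert (ell0 : ell 0 = d 0) by (unfold ell; rewrite concat_0; auto).
      assert (ell1 : ell 1 = d 0) by (unfold ell; rewrite concat_1, rev_1; auto).
      destruct (dU i Hi (d 0, x0) ltac:(apply Ud, I0)) as [c [[Pc [c0 c1]] Hcond]].
      simpl in c0, c1.
      specialize (Hcond (fun t => (ell t, x0))).
      simpl in Hcond.
      assert (Hl' : path_homotopic (fun _ : R => x0) (concat (concat (rev_path c) (fun t => ell t)) c)).
      { apply Hcond.
        - split. apply pair_path; auto. apply const_path_ok. split; simpl; rewrite ?ell0, ?ell1; auto.
        - split. apply pair_path; auto. apply const_path_ok. auto. }
      rewrite <- ell0. apply (conj_trivial c ell); auto; try congruence.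
      rewrite c1. exact Hl'.
Qed.

Lemma part2 (X : Top) : forall n : nat, cat1_le (prodTop X X) n -> TCD_le X n.
Proof.
  intros n [E [p [[[Pc [Psurj _]] [[[e0] PE] Eloops]] [U [oU [cU sU]]]]]].
  exists U. split; [auto|split; [auto|]].
  intros i Hi u Uu.
  destruct (sU i Hi) as [s [Cs Ps]].
  destruct (Psurj u) as [e1 pe1]. destruct (Psurj (snd u, snd u)) as [e2 pe2].
  destruct (PE e1 e2 I I) as [g [[Pg [g0 g1]] _]].
  set (c := fun t => fst (p (g t))).
  exists c. split.
  { split. exact (@comp_path (prodTop X X) X fst (fun t => p (g t)) fst_cont (comp_path p g Pc Pg)).
    split; unfold c; [rewrite g0, pe1|rewrite g1, pe2]; auto. }
  intros l [Pl [l0 l1]] Il.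
  assert (Psl : is_path (fun t => s (l t))) by (apply (comp_on_path (U i)); auto).
  assert (Hsl : path_homotopic (fun t => s (l t)) (const_path (s u))).
  { apply Eloops. split; auto. rewrite l0, l1. split; auto. }
  assert (Hpl : forall t, I01 t -> p (s (l t)) = l t) by (intros t It; apply Ps, Il; auto).
  assert (Pu : p (s u) = u) by (apply Ps; auto).
  assert (Hf : forall (f : prodTop X X -> X), continuous f ->
     path_homotopic (fun t => f (l t)) (const_path (f (l 0)))).
  { intros f Cf. pose proof (hom_map (fun x => f (p x)) _ _ ltac:(intros V HV; exact (Pc _ (Cf V HV))) Hsl) as HH.
    simpl in HH. apply hom_ext_l with (fun t => f (p (s (l t)))).
    - apply hom_ext_r with (fun t => f (p (const_path (s u) t))); auto.
      intros t It. unfold const_path. rewrite Pu, l0. auto.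
    - intros t It. rewrite Hpl; auto. }
  apply conj_of_trivial.
  - exact (@comp_path (prodTop X X) X fst (fun t => p (g t)) fst_cont (comp_path p g Pc Pg)).
  - unfold c. rewrite g0, pe1, l0. auto.
  - unfold c. rewrite g1, pe2, l0. auto.
  - apply (Hf fst fst_cont).
  - apply (Hf snd snd_cont).
Qed.

Theorem mainTheorem8 (X : Top) :
  connected X -> locally_path_connected X -> semilocally_simply_connected X ->
  (forall n : nat, TCD_le X n -> cat1_le X n) /\
  (forall n : nat, cat1_le (prodTop X X) n -> TCD_le X n).
Proof.
  intros Hc Hl Hs. split. apply part1; auto. apply part2.
Qed.
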